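(* For any nonempty configuration and integer shift $G$, the expected number of times a full execution of the inter-level sampler (Algorithm 1, run until it returns a level) enters the refinement loop (i.e. hits the boundary case $x=A_\ell(G)$) is at most $N/M(G)$.
   Context: Fix an integer $b\ge 2$. There is a set $\mathcal L$ of $N$ levels, which are consecutive integers. Each level $\ell$ holds a finite (possibly empty) multiset of normalized significands, each an integer in $[2^{b-1},2^b)$. Let $z$ be the total number of stored significands over all levels; assume $z<2^b$. For each level, $SS_\ell$ is the sum of its significands (so $SS_\ell=0$ iff the level is empty); set $SS_\ell=0$ for integers $\ell\notin\mathcal L$. The level weight is $W_\ell=SS_\ell2^\ell$. For an integer global shift $G$, $A_\ell(G)=\lfloor W_\ell2^G\rfloor+1$ if $SS_\ell>0$ and $A_\ell(G)=0$ if $SS_\ell=0$; $A(G)=\sum_\ell A_\ell(G)$ and $M(G)=\sum_\ell W_\ell2^G$. The configuration is nonempty if $z\ge1$. Inter-level sampler (Algorithm 1), with shift $G$ and $A=A(G)$: it performs independent outer iterations. In an outer iteration, draw $x$ uniformly from $\{1,\dots,A\}$ and scan the levels in decreasing order starting from the largest nonempty level. At the current level $\ell$: if $x<A_\ell(G)$, return $\ell$; if $x=A_\ell(G)$, run the refinement loop for $m=1,2,\dots$: draw $r$ uniformly from $\{0,\dots,2^b-1\}$ independently, let $t=\lfloor SS_\ell 2^{\ell+G+mb}\rfloor \bmod 2^b$; if $r<t$ return $\ell$; else if $r>t$ or $\ell+G+mb\ge 0$, abandon this outer iteration and start a new one; otherwise continue with $m+1$. If $x>A_\ell(G)$, set $x\leftarrow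 x-A_\ell(G)$ and move to the next lower level. *)

(* Defs.v *)
From HB Require Import structures.
From mathcomp Require Import all_boot all_order all_algebra.
From mathcomp Require Import all_classical all_reals all_analysis.
Set Implicit Arguments. Unset Strict Implicit. Unset Printing Implicit Defensive.
Import Order.TTheory GRing.Theory Num.Theory.
Local Open Scope ring_scope.

(* Configuration: levels are the N consecutive integers lo, lo+1, ..., lo+N-1;
   level lo+i (i < N) holds the multiset (list) S i of significands. *)
Section Sampler.
Variables (R : realType) (b N : nat) (lo G : int) (S : nat -> seq nat).

Definition SS (i : nat) : nat := sumn (S i).

Definition Aof (i : nat) : int :=
  if (0 < SS i)%N
  then Num.floor ((SS i)%:R * (2 : R) ^ (lo + i%:Z + G)) + 1
  else 0.

Definition Atot : int := \sum_(i < N) Aof i.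

Definition Mof : R := \sum_(i < N) (SS i)%:R * (2 : R) ^ (lo + i%:Z + G).

Definition tval (i m : nat) : int :=
  (Num.floor ((SS i)%:R * (2 : R) ^ (lo + i%:Z + G + (m * b)%N%:Z))
     %% (2 ^ b)%N%:Z)%Z.

Inductive scan_res := SReturn of nat | SBoundary of nat | SFail.

(* scan the levels with indices k-1, k-2, ..., 0 (decreasing level order);
   empty levels have A = 0 < x and are passed over with x unchanged. *)
Fixpoint scan (k : nat) (x : int) : scan_res :=
  match k with
  | 0%N => SFail
  | k'.+1 =>
      let a := Aof k' in
      if x < a then SReturn k'
      else if x == a then SBoundary k'
      else scan k' (x - a)
  end.

(* Refinement loop at level index i, starting with counter m, consuming the
   exact list rs of draws r. Some true = return, Some false = abandon the outer
   iteration, None = rs is not a complete trace of the loop. *)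
Fixpoint refine (i m : nat) (rs : seq nat) : option bool :=
  match rs with
  | [::] => None
  | r :: rs' =>
      if (2 ^ b <= r)%N then None else
      let t := tval i m in
      if r%:Z < t then (if rs' is [::] then Some true else None)
      else if (t < r%:Z) || (0 <= lo + i%:Z + G + (m * b)%N%:Z)
      then (if rs' is [::] then Some false else None)
      else refine i m.+1 rs'
  end.

(* One outer iteration, given its draws: x and the refinement draws rs.
   Result: Some (returned?, number of boundary hits) or None if not a
   complete trace. *)
Definition iter_out (it : int * seq nat) : option (bool * nat) :=
  let: (x, rs) := it in
  if (1 <= x) && (x <= Atot) then
    match scan N x with
    | SReturn _ => if rs is [::] then Some (true, 0%N) else None
    | SBoundary i => omap (fun ret => (ret, 1%N)) (refine i 1 rs)
    | SFail => None
    end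
  else None.

Definition iter_prob (it : int * seq nat) : R :=
  (Atot%:~R)^-1 * ((2 ^ b)%N%:R) ^- (size it.2).

Fixpoint exec_ok (tr : seq (int * seq nat)) : bool :=
  match tr with
  | [::] => false
  | [:: it] => if iter_out it is Some (true, _) then true else false
  | it :: tr' =>
      (if iter_out it is Some (false, _) then true else false) && exec_ok tr'
  end.

Definition exec_hits (tr : seq (int * seq nat)) : nat :=
  sumn [seq (if iter_out it is Some (_, h) then h else 0%N) | it <- tr].

Definition exec_prob (tr : seq (int * seq nat)) : R :=
  \prod_(it <- tr) iter_prob it.

Definition expected_boundary_hits : \bar R :=
  (\esum_(tr in [set tr | exec_ok tr]) ((exec_prob tr) * (exec_hits tr)%:R)%:E)%R.

End Sampler.

(* Main.v *)
Require Import Defs.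
From HB Require Import structures.
From mathcomp Require Import all_boot all_order all_algebra.
From mathcomp Require Import all_classical all_reals all_analysis.
From mathcomp Require Import finmap.
From mathcomp Require Import zify ring lra.
From Stdlib Require Import Lia.
Require Import Defs.
Import Order.TTheory GRing.Theory Num.Theory.
Set Implicit Arguments. Unset Strict Implicit. Unset Printing Implicit Defensive.
Local Open Scope ring_scope.

Lemma gen_partition (R : realType) (T K : eqType) (k : T -> K) (s : seq T) (F : T -> R) :
  \sum_(u <- s) F u = \sum_(x <- undup (map k s)) \sum_(u <- s | k u == x) F u.
Proof.
under [RHS]eq_bigr do rewrite big_mkcond /=.
rewrite exchange_big /=; rewrite [LHS]big_seq [RHS]big_seq; apply: eq_bigr => u us.
rewrite -big_mkcond /=.
have hu : k u \in undup (map k s) by rewrite mem_undup; apply: map_f.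
rewrite big_const_seq.
have -> : count (fun x => k u == x) (undup (map k s)) = 1%N.
  have -> : count (fun x => k u == x) (undup (map k s)) = count_mem (k u) (undup (map k s)).
    by apply: eq_count => x /=; rewrite eq_sym.
  by rewrite count_uniq_mem ?undup_uniq ?hu.
by rewrite /= addr0.
Qed.

Lemma gen_sub_le (R : realType) (T : eqType) (s1 s2 : seq T) (c : T -> R) :
  uniq s1 -> uniq s2 -> (forall x, 0 <= c x) -> (forall x, x \notin s2 -> c x = 0) ->
  \sum_(x <- s1) c x <= \sum_(x <- s2) c x.
Proof.
move=> u1 u2 c0 cz.
have -> : \sum_(x <- s1) c x = \sum_(x <- s1 | x \in s2) c x.
  rewrite [RHS]big_mkcond; apply: eq_bigr => x _.
  by case: ifP => // /negbT /cz.
rewrite -big_filter.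
set s3 := [seq x <- s1 | x \in s2].
have u3 : uniq s3 by apply: filter_uniq.
have p : perm_eq s2 (s3 ++ [seq x <- s2 | x \notin s3]).
  apply: uniq_perm => //.
    rewrite cat_uniq u3 filter_uniq // andbT.
    apply/hasPn => x; rewrite mem_filter => /andP[]; done.
  move=> x; rewrite mem_cat mem_filter.
  case x3 : (x \in s3) => /=.
    by move: x3; rewrite mem_filter => /andP[].
  done.
rewrite (perm_big _ p) big_cat /= lerDl.
by apply: sumr_ge0 => x _.
Qed.

Lemma gen_single (R : realType) (T : eqType) (s : seq T) (a : T) (F : T -> R) :
  uniq s -> 0 <= F a -> (forall x, x != a -> F x = 0) -> \sum_(x <- s) F x <= F a.
Proof.
move=> us Fa Fz.
have -> : \sum_(x <- s) F x = \sum_(x <- s | x == a) F a.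
  rewrite [RHS]big_mkcond; apply: eq_bigr => x _.
  by case: eqP => [->|/eqP/Fz].
rewrite big_const_seq (count_uniq_mem a us).
by case: (a \in s) => /=; rewrite ?addr0.
Qed.

Definition tails (T : eqType) (L : seq (seq T)) (r : T) : seq (seq T) :=
  [seq behead u | u <- L & ohead u == Some r].

Lemma tails_sum (R : realType) (T : eqType) (L : seq (seq T)) (r : T) (F : seq T -> R) :
  \sum_(u <- L | ohead u == Some r) F u = \sum_(s <- tails L r) F (r :: s).
Proof.
rewrite /tails big_map big_filter; apply: eq_bigr => -[|y u] //= /eqP[->] //.
Qed.

Lemma tails_uniq (T : eqType) (L : seq (seq T)) (r : T) : uniq L -> uniq (tails L r).
Proof.
move=> uL; rewrite /tails map_inj_in_uniq ?filter_uniq //.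
move=> [|y u] [|z v]; rewrite !mem_filter //= => /andP[/eqP[->] _] /andP[/eqP[->] _] -> //.
Qed.

Lemma tails_mem (T : eqType) (L : seq (seq T)) (r : T) s : s \in tails L r -> (r :: s) \in L.
Proof.
by case/mapP => -[|y u]; rewrite mem_filter //= => /andP[/eqP[->] uL] ->.
Qed.

Definition snds (T U : eqType) (L : seq (T * U)) (x : T) : seq U :=
  [seq u.2 | u <- L & u.1 == x].

Lemma snds_sum (R : realType) (T U : eqType) (L : seq (T * U)) (x : T) (F : T * U -> R) :
  \sum_(u <- L | u.1 == x) F u = \sum_(s <- snds L x) F (x, s).
Proof.
by rewrite /snds big_map big_filter; apply: eq_bigr => -[y u] /= /eqP ->.
Qed.

Lemma snds_uniq (T U : eqType) (L : seq (T * U)) (x : T) : uniq L -> uniq (snds L x).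
Proof.
move=> uL; rewrite /snds map_inj_in_uniq ?filter_uniq //.
move=> [y u] [z v]; rewrite !mem_filter /= => /andP[/eqP-> _] /andP[/eqP-> _] -> //.
Qed.

Lemma sum_pmap (R : realType) (T : eqType) (s : seq (option T)) (c : option T -> R) :
  c None = 0 -> \sum_(x <- s) c x = \sum_(y <- pmap id s) c (Some y).
Proof.
move=> c0; elim: s => [|[y|] s IH]; rewrite ?big_nil //= ?big_cons IH //.
by rewrite c0 add0r.
Qed.

Lemma sum_piece (R : realType) (K t : nat) (a c d : R) : (t < K)%N ->
  \sum_(r <- iota 0 K) (if (r < t)%N then a else if r == t then c else d)
  = t%:R * a + c + (K - t.+1)%:R * d.
Proof.
move=> tK.
have -> : K = (t + (1 + (K - t.+1)))%N by lia.
rewrite iotaD big_cat iotaD big_cat /= add0n big_cons big_nil.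
rewrite ltnn eqxx addr0.
have -> : \sum_(r <- iota 0 t) (if (r < t)%N then a else if r == t then c else d)
   = \sum_(r <- iota 0 t) a.
  by rewrite big_seq [RHS]big_seq; apply: eq_bigr => r; rewrite mem_iota => /andP[_ ->].
have -> : \sum_(r <- iota (t + 1) (K - t.+1)) (if (r < t)%N then a else if r == t then c else d)
   = \sum_(r <- iota (t + 1) (K - t.+1)) d.
  rewrite big_seq [RHS]big_seq; apply: eq_bigr => r; rewrite mem_iota => /andP[h _].
  have -> : (r < t)%N = false by lia.
  by have -> : (r == t) = false by apply/eqP; lia.
rewrite !big_const_seq !count_predT !size_iota.
have E : forall n (x : R), iter n (+%R x) 0 = n%:R * x.
  by move=> n x; elim: n => [|n IH] /=; rewrite ?mul0r // IH mulrSr mulrDl mul1r addrC.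
rewrite !E addrA.
by have -> : (t + (1 + (K - t.+1)) - t.+1)%N = (K - t.+1)%N by lia.
Qed.

Definition frac (R : realType) (x : R) : R := x - (Num.floor x)%:~R.

Lemma frac_ge0 (R : realType) (x : R) : 0 <= frac x.
Proof. by rewrite /frac subr_ge0 floor_le. Qed.

Lemma frac_lt1 (R : realType) (x : R) : frac x < 1.
Proof. by rewrite /frac ltrBlDl -[X in _ + X]/(1%:~R) -intrD floorD1_gt. Qed.

Lemma frac_int (R : realType) (z : int) : frac (z%:~R : R) = 0.
Proof. by rewrite /frac intrKfloor subrr. Qed.

Lemma frac_step (R : realType) (n : nat) (x : R) : (0 < n)%N ->
  n%:R * frac x = ((Num.floor (n%:R * x) %% n%:Z)%Z)%:~R + frac (n%:R * x).
Proof.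
move=> n0.
set f := Num.floor x; set y := x - f%:~R.
have y0 : 0 <= y by apply: frac_ge0.
have y1 : y < 1 by apply: frac_lt1.
have Hx : n%:R * x = n%:R * y + (f * n%:Z)%:~R.
  by rewrite /y intrM mulrBr -[n%:R]/((n%:Z)%:~R) [_ * (n%:Z)%:~R]mulrC subrK.
have Hf : Num.floor (n%:R * x) = Num.floor (n%:R * y) + f * n%:Z.
  by rewrite Hx floorDrz ?intrKfloor // intr_int.
have g0 : 0 <= Num.floor (n%:R * y) by rewrite floor_ge0 mulr_ge0.
have g1 : Num.floor (n%:R * y) < n%:Z.
  rewrite floor_lt_int; rewrite -[X in _ < X]mulr1.
  by rewrite ltr_pM2l // ltr0n.
rewrite Hf [X in (X %% _)%Z]addrC modzMDl modz_small ?g0 ?g1 //.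
rewrite /frac Hf intrD Hx /y.
ring.
Qed.


Section Samp.
Variables (R : realType) (b N : nat) (lo G : int) (S : nat -> seq nat).
Hypothesis b0 : (0 < b)%N.

Local Notation K := (2 ^ b)%N.
Local Notation KR := ((2 ^ b)%N%:R : R).

Definition Ex (i : nat) : int := lo + i%:Z + G.
Definition Y (i m : nat) : R := (SS S i)%:R * (2:R) ^ (Ex i + (m * b)%N%:Z).
Definition D (i m : nat) : R := frac (Y i m).
Definition tv (i m : nat) : int := tval R b lo G S i m.
Definition rho (i m : nat) : R := ((tv i m)%:~R + D i m) / KR.

Lemma K0 : (0 < K)%N. Proof. by rewrite expn_gt0. Qed.
Lemma KR0 : 0 < KR. Proof. by rewrite ltr0n K0. Qed.

Lemma tv_modE i m : tv i m = (Num.floor (Y i m) %% K%:Z)%Z.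
Proof. by []. Qed.

Lemma tv_ge0 i m : 0 <= tv i m.
Proof. by rewrite tv_modE modz_ge0 // eqz_nat -lt0n K0. Qed.

Lemma tv_ltK i m : tv i m < K%:Z.
Proof. by rewrite tv_modE ltz_pmod // ltz_nat K0. Qed.

Lemma Y_succ i m : Y i m.+1 = KR * Y i m.
Proof.
rewrite /Y mulrCA; congr (_ * _).
have -> : Ex i + (m.+1 * b)%N%:Z = (Ex i + (m * b)%N%:Z) + b%:Z.
  rewrite mulSn PoszD; lia.
rewrite exprzDr ?unitfE ?pnatr_eq0 // mulrC; congr (_ * _).
by rewrite natrX.
Qed.

Lemma D_step i m : KR * D i m = (tv i m.+1)%:~R + D i m.+1.
Proof. by rewrite /D frac_step ?K0 // -Y_succ tv_modE. Qed.

Lemma D_term i m : 0 <= Ex i + (m * b)%N%:Z -> D i m = 0.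
Proof.
move=> h; rewrite /D /Y.
case E: (Ex i + (m * b)%N%:Z) h => [n|n] // _.
have -> : (SS S i)%:R * (2:R) ^ (Posz n) = ((SS S i * 2 ^ n)%N%:Z)%:~R.
  by rewrite -pmulrn natrM natrX.
exact: frac_int.
Qed.

Lemma rho_succ i m : rho i m.+1 = D i m.
Proof.
rewrite /rho -D_step mulrC mulrA mulVf ?mul1r //.

Qed.

Lemma rho_term i m : 0 <= Ex i + (m * b)%N%:Z -> rho i m = (tv i m)%:~R / KR.
Proof. by move=> h; rewrite /rho D_term // addr0. Qed.

Lemma rho_ge0 i m : 0 <= rho i m.
Proof. apply: divr_ge0; last exact: ltW KR0. apply: addr_ge0; [rewrite ler0z; exact: tv_ge0 | exact: frac_ge0]. Qed.


Definition ww (rs : seq nat) : R := KR ^- (size rs).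
Definition Fr (i m : nat) (a c : R) (rs : seq nat) : R :=
  ww rs * (a * (refine R b lo G S i m rs == Some true)%:R
           + c * (refine R b lo G S i m rs == Some false)%:R).
Definition termb (i m : nat) : bool := (0 <= Ex i + (m * b)%N%:Z).

Lemma ww_cons r s : ww (r :: s) = KR^-1 * ww s.
Proof. by rewrite /ww /= exprSr invfM mulrC. Qed.

Lemma ww_ge0 s : 0 <= ww s.
Proof. by rewrite /ww invr_ge0 exprn_ge0 // ltW // KR0. Qed.

Lemma Fr_ge0 i m a c s : 0 <= a -> 0 <= c -> 0 <= Fr i m a c s.
Proof.
move=> a0 c0; rewrite /Fr mulr_ge0 ?ww_ge0 // addr_ge0 // mulr_ge0 //.
Qed.

Lemma Fr_only_nil i m a c r (L : seq (seq nat)) : 0 <= a -> 0 <= c -> uniq L ->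
  (forall s, s != [::] -> refine R b lo G S i m (r :: s) = None) ->
  \sum_(s <- L) Fr i m a c (r :: s) <= Fr i m a c [:: r].
Proof.
move=> a0 c0 uL h.
apply: (gen_single (F := fun s => Fr i m a c (r :: s))) => //; first exact: Fr_ge0.
by move=> s /h; rewrite /Fr => ->; rewrite /= !mulr0 addr0 mulr0.
Qed.

Lemma refine_cons i m r s : refine R b lo G S i m (r :: s) =
  if (K <= r)%N then None else
  if (r%:Z < tv i m) then (if s is [::] then Some true else None)
  else if (tv i m < r%:Z) || termb i m then (if s is [::] then Some false else None)
  else refine R b lo G S i m.+1 s.
Proof. by []. Qed.

Lemma refine_step i m (a c : R) (L : seq (seq nat)) : 0 <= a -> 0 <= c -> uniq L ->
  (~~ termb i m -> forall L', uniq L' ->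
     \sum_(rs <- L') Fr i m.+1 a c rs <= a * rho i m.+1 + c * (1 - rho i m.+1)) ->
  \sum_(rs <- L) Fr i m a c rs <= a * rho i m + c * (1 - rho i m).
Proof.
move=> a0 c0 uL IH.
have htn : tv i m = (`|tv i m|%N)%:Z by rewrite gez0_abs // tv_ge0.
set tn := `|tv i m|%N in htn.
have tnK : (tn < K)%N by rewrite -ltz_nat -htn tv_ltK.
set cr := fun r : nat => if (r < K)%N then (if (r < tn)%N then a / KR
   else if r == tn then (if termb i m then c / KR
        else (a * rho i m.+1 + c * (1 - rho i m.+1)) / KR) else c / KR) else 0.
have cr0 : forall r, 0 <= cr r.
  move=> r; rewrite /cr; have iK := ltW KR0.
  case: ifP => // _; case: ifP => _; first exact: divr_ge0.
  case: ifP => _; last exact: divr_ge0.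
  case: ifP => _; first exact: divr_ge0.
  apply: divr_ge0 => //; apply: addr_ge0; apply: mulr_ge0 => //; first exact: rho_ge0.
  by rewrite subr_ge0 rho_succ; apply: ltW; apply: frac_lt1.
rewrite (gen_partition ohead).
apply: (le_trans (y := \sum_(x <- undup (map ohead L)) (if x is Some r then cr r else 0))).
  apply: ler_sum => -[r|] _; last first.
    rewrite big1 // => -[|y u] //= _.
    by rewrite /Fr /= !mulr0 addr0 mulr0.
  rewrite tails_sum.
  have uT := tails_uniq r uL.
  have wr : ww [:: r] = KR^-1 by rewrite ww_cons /ww expr0 invr1 mulr1.
  rewrite /cr; case: (ltnP r K) => hr; last first.
    rewrite big1 // => s _; rewrite /Fr refine_cons hr /=.
    by rewrite !mulr0 addr0 mulr0.
  have hr' : (K <= r)%N = false by rewrite leqNgt hr.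
  case: ifP => hrt.
    apply: le_trans (Fr_only_nil a0 c0 uT _) _.
      by move=> [|y s] // _; rewrite refine_cons hr' htn ltz_nat hrt.
    by rewrite /Fr refine_cons hr' htn ltz_nat hrt wr /= mulr1 mulr0 addr0 mulrC.
  have hrt' : (r%:Z < tv i m) = false by rewrite htn ltz_nat hrt.
  case: ifP => hrt2.
    move/eqP: hrt2 => hrt2.
    have hrt3 : (tv i m < r%:Z) = false by rewrite htn ltz_nat hrt2 ltnn.
    case: ifP => ht.
      apply: le_trans (Fr_only_nil a0 c0 uT _) _.
        by move=> [|y s] // _; rewrite refine_cons hr' hrt' hrt3 ht.
      by rewrite /Fr refine_cons hr' hrt' hrt3 ht wr /= mulr1 mulr0 add0r mulrC.
    under eq_bigr => s _ do rewrite /Fr refine_cons hr' hrt' hrt3 ht /= ww_cons -mulrA -/(Fr i m.+1 a c s).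
    rewrite -mulr_sumr mulrC ler_pM2r ?invr_gt0 ?KR0 //.
    by apply: IH; rewrite ?ht.
  have hrt3 : (tv i m < r%:Z) = true.
    by rewrite htn ltz_nat ltn_neqAle eq_sym hrt2 leqNgt hrt.
  apply: le_trans (Fr_only_nil a0 c0 uT _) _.
    by move=> [|y s] // _; rewrite refine_cons hr' hrt' hrt3.
  by rewrite /Fr refine_cons hr' hrt' hrt3 wr /= mulr1 mulr0 add0r mulrC.
rewrite (@sum_pmap _ _ _ (fun x => if x is Some r then cr r else 0)) //.
apply: (le_trans (gen_sub_le (s2 := iota 0 K) _ _ _ _)).
- by apply: (pmap_uniq (g := Some)) => [[]|]; rewrite ?undup_uniq.
- exact: iota_uniq.
- by move=> r; apply: cr0.
- by move=> r; rewrite mem_iota /cr add0n leq0n /= => /negbTE ->.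
set C := (if termb i m then c / KR
        else (a * rho i m.+1 + c * (1 - rho i m.+1)) / KR).
rewrite (@eq_big_seq _ _ _ _ _ cr
   (fun r => if (r < tn)%N then a / KR else if r == tn then C else c / KR)); last first.
  by move=> r; rewrite mem_iota add0n /= /cr => ->.
rewrite sum_piece // /rho htn natrB //.
have KR0' : KR != 0 by apply: lt0r_neq0; apply: KR0.
rewrite le_eqVlt; apply/orP; left; apply/eqP.
rewrite /C; case: ifP => ht.
  rewrite D_term //; field => //.
rewrite rho_succ; field => //.
Qed.


Lemma refine_bound i (a c : R) k : 0 <= a -> 0 <= c -> forall m (L : seq (seq nat)),
  uniq L -> termb i (m + k) ->
  \sum_(rs <- L) Fr i m a c rs <= a * rho i m + c * (1 - rho i m).
Proof.
move=> a0 c0; elim: k => [|k IH] m L uL hk.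
  by apply: refine_step => //; rewrite addn0 in hk; rewrite hk.
apply: refine_step => // _ L' uL'; apply: IH => //.
by rewrite addSnnS.
Qed.

Lemma exists_term i : termb i (1 + `|Ex i|%N).
Proof.
rewrite /termb.
have h1 : (`|Ex i|%N <= (1 + `|Ex i|%N) * b)%N.
  by rewrite mulnC -[X in (X <= _)%N]mul1n leq_mul // ltnW.
have h2 : - Ex i <= (`|Ex i|%N)%:Z by rewrite abszE -normrN ler_norm.
have h3 : (`|Ex i|%N)%:Z <= ((1 + `|Ex i|%N) * b)%N%:Z by rewrite lez_nat.
by rewrite -lerBlDl sub0r (le_trans h2 h3).
Qed.

Lemma Aof_ge0 i : 0 <= Aof R lo G S i.
Proof.
rewrite /Aof; case: ifP => // _.
by rewrite addr_ge0 // floor_ge0 mulr_ge0 // exprz_ge0.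
Qed.

Lemma Aof_ge1 i : (0 < SS S i)%N -> 1 <= Aof R lo G S i.
Proof.
move=> h; rewrite /Aof h lerDr.
by rewrite floor_ge0 mulr_ge0 // exprz_ge0.
Qed.

Lemma Aof_floor i : (0 < SS S i)%N -> (Aof R lo G S i - 1)%:~R + rho i 1 = Y i 0.
Proof.
move=> h; rewrite rho_succ /D /frac /Aof h addrK /Y mul0n addr0.
by rewrite /Ex addrC subrK.
Qed.

Lemma Aof_empty i : (0 < SS S i)%N = false -> Aof R lo G S i = 0.
Proof. by rewrite /Aof => ->. Qed.

Definition bnd (u : R) (v : nat -> R) (x : scan_res) : R :=
  match x with SReturn _ => u | SBoundary i => v i | SFail => 0 end.

Definition Asum k : int := \sum_(i < k) Aof R lo G S i.

Lemma scan_sum (u : R) (v : nat -> R) k :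
  \sum_(j <- iota 0 `|Asum k|%N) bnd u v (scan R lo G S k (j.+1)%:Z)
  = \sum_(i < k) (if (0 < SS S i)%N then (Aof R lo G S i - 1)%:~R * u + v i else 0).
Proof.
elim: k => [|k IH]; first by rewrite /Asum !big_ord0 big_nil.
have hA : 0 <= \sum_(i < k) Aof R lo G S i by apply: sumr_ge0 => i _; apply: Aof_ge0.
have ha := Aof_ge0 k.
rewrite /Asum big_ord_recr /= [in RHS]big_ord_recr /= -IH /Asum.
set B := `|(\sum_(i < k) Aof R lo G S i)%R|%N.
have hB : \sum_(i < k) Aof R lo G S i = B%:Z by rewrite gez0_abs.
set a := `|Aof R lo G S k|%N.
have ha' : Aof R lo G S k = a%:Z by rewrite gez0_abs.
rewrite hB ha' -PoszD absz_nat addnC iotaD big_cat /= add0n addrC.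
congr (_ + _).
  rewrite (_ : iota a B = map (addn a) (iota 0 B)); last by rewrite -iotaDl addn0.
  rewrite big_map; apply: eq_bigr => j _.
  have -> : ((a + j).+1%:Z < a%:Z) = false by rewrite ltz_nat; lia.
  have -> : ((a + j).+1%:Z == a%:Z) = false by apply/eqP => -[]; lia.
  congr (bnd _ _ (scan _ _ _ _ _ _)).
  rewrite -addn1 -[(j.+1)]addn1 !PoszD; lia.
case: ifP => hs; last first.
  have a0 : a = 0%N by rewrite /a Aof_empty. by rewrite a0 big_nil.
have a1 : (0 < a)%N by rewrite -ltz_nat -ha' (lt_le_trans _ (Aof_ge1 hs)).
rewrite (@eq_big_seq _ _ _ _ _ _
   (fun r => if (r < a.-1)%N then u else if r == a.-1 then v k else 0)); last first.
  move=> j; rewrite mem_iota add0n /= => ja.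
  rewrite ltz_nat eqz_nat.
  have -> : (j.+1 < a)%N = (j < a.-1)%N by lia.
  have -> : (j.+1 == a) = (j == a.-1) by apply/eqP/eqP => H; lia.
  case: ifP => // h1; case: ifP => // /negbT /eqP ?; move/negbT: h1; lia.
rewrite sum_piece; last by lia.
have -> : (a - a.-1.+1)%N = 0%N by lia.
rewrite mul0r addr0; congr (_ + _).
have -> : (a%:Z - 1) = (a.-1)%:Z by rewrite -[a in LHS]prednK // -addn1 PoszD addrK.
by rewrite mulrC.
Qed.


Local Notation AR := ((Atot R N lo G S)%:~R : R).
Definition retb (it : int * seq nat) : bool :=
  if iter_out R b N lo G S it is Some (true, _) then true else false.
Definition abdb (it : int * seq nat) : bool :=
  if iter_out R b N lo G S it is Some (false, _) then true else false.
Definition hitn (it : int * seq nat) : nat :=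
  if iter_out R b N lo G S it is Some (_, h) then h else 0%N.
Definition Fi (a c g : R) (it : int * seq nat) : R :=
  iter_prob R b N lo G S it * (a * (retb it)%:R + c * (abdb it)%:R + g * (hitn it)%:R).

Lemma iter_prob_E x rs : iter_prob R b N lo G S (x, rs) = AR^-1 * ww rs.
Proof. by []. Qed.

Lemma iter_out_E x rs : iter_out R b N lo G S (x, rs) =
  if (1 <= x) && (x <= Atot R N lo G S) then
    match scan R lo G S N x with
    | SReturn _ => if rs is [::] then Some (true, 0%N) else None
    | SBoundary i => omap (fun ret => (ret, 1%N)) (refine R b lo G S i 1 rs)
    | SFail => None
    end
  else None.
Proof. by []. Qed.

Lemma iter_bound (a c g : R) (U : seq (int * seq nat)) :
  0 <= a -> 0 <= c -> 0 <= g -> uniq U -> 0 < Atot R N lo G S ->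
  \sum_(it <- U) Fi a c g it <= AR^-1 * \sum_(i < N)
     (if (0 < SS S i)%N then (Aof R lo G S i - 1)%:~R * a
        + (a * rho i 1 + c * (1 - rho i 1) + g) else 0).
Proof.
move=> a0 c0 g0 uU A0.
have AR0 : 0 < AR by rewrite ltr0z.
have iAR0 : 0 <= AR^-1 by rewrite invr_ge0 ltW.
rewrite (gen_partition fst).
set v := fun i => a * rho i 1 + c * (1 - rho i 1) + g.
have v0 : forall i, 0 <= v i.
  move=> i; rewrite /v !addr_ge0 // mulr_ge0 // ?rho_ge0 //.
  by rewrite subr_ge0 rho_succ ltW // frac_lt1.
set cx := fun x : int => if (1 <= x) && (x <= Atot R N lo G S)
   then AR^-1 * bnd a v (scan R lo G S N x) else 0.
have cx0 : forall x, 0 <= cx x.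
  move=> x; rewrite /cx; case: ifP => // _; apply: mulr_ge0 => //.
  by case: (scan _ _ _ _ _ _) => /=.
apply: (le_trans (y := \sum_(x <- undup (map fst U)) cx x)).
  apply: ler_sum => x _; rewrite snds_sum.
  have uT := snds_uniq x uU.
  rewrite /cx; case: ifP => hx; last first.
    rewrite big1 // => rs _; rewrite /Fi /retb /abdb /hitn iter_out_E hx.
    by rewrite !mulr0 !addr0 mulr0.
  case E: (scan R lo G S N x) => [j|i|] /=.
  - apply: le_trans (gen_single (F := fun rs => Fi a c g (x, rs)) (a := [::]) uT _ _) _.
    + rewrite /Fi mulr_ge0 //; first by rewrite iter_prob_E mulr_ge0 ?ww_ge0.
      by rewrite !addr_ge0 // mulr_ge0.
    + move=> [|y s] // _; rewrite /Fi /retb /abdb /hitn iter_out_E hx E.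
      by rewrite !mulr0 !addr0 mulr0.
    + rewrite /Fi /retb /abdb /hitn iter_out_E hx E iter_prob_E /ww /= expr0 invr1.
      by rewrite mulr1 mulr1 mulr0 mulr0 !addr0.
  - have -> : \sum_(rs <- snds U x) Fi a c g (x, rs)
       = AR^-1 * \sum_(rs <- snds U x) Fr i 1 (a + g) (c + g) rs.
      rewrite mulr_sumr; apply: eq_bigr => rs _.
      rewrite /Fi /retb /abdb /hitn iter_out_E hx E iter_prob_E /Fr -mulrA.
      by congr (_ * (_ * _)); case: (refine _ _ _ _ _ _ _ _) => [[]|] /=; ring.
    rewrite ler_pM2l ?invr_gt0 //.
    apply: le_trans (refine_bound (k := `|Ex i|%N) _ _ uT (exists_term i)) _.
    + by rewrite addr_ge0.
    + by rewrite addr_ge0.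
    + by rewrite /v le_eqVlt; apply/orP; left; apply/eqP; ring.
  - rewrite big1 ?mulr0 // => rs _; rewrite /Fi /retb /abdb /hitn iter_out_E hx E.
    by rewrite !mulr0 !addr0 mulr0.
have hB : Atot R N lo G S = (`|Atot R N lo G S|%N)%:Z by rewrite gez0_abs // ltW.
set B := `|Atot R N lo G S|%N in hB.
apply: (le_trans (gen_sub_le (s2 := [seq (j.+1)%:Z | j <- iota 0 B]) _ _ cx0 _)).
- exact: undup_uniq.
- by rewrite map_inj_uniq ?iota_uniq // => p q [].
- move=> x hx; rewrite /cx; case: ifP => // /andP[h1 h2]; exfalso; move/negP: hx; apply.
  apply/mapP.
  have hx : x = (`|x|%N)%:Z by rewrite gez0_abs // (le_trans _ h1).
  move: h1 h2; rewrite hx hB lez_nat => h1 h2.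
  exists (`|x|.-1)%N; first by rewrite mem_iota; lia.
  by rewrite prednK.
rewrite big_map.
rewrite (@eq_big_seq _ _ _ _ _ _ (fun j => AR^-1 * bnd a v (scan R lo G S N (j.+1)%:Z))); last first.
  move=> j; rewrite mem_iota add0n /= /cx hB => hj.
  by rewrite !lez_nat /= hj.
rewrite -mulr_sumr.
have -> : B = `|Asum N|%N by [].
by rewrite scan_sum.
Qed.

Local Notation eok := (exec_ok R b N lo G S).
Local Notation eprob := (exec_prob R b N lo G S).
Local Notation ehits := (exec_hits R b N lo G S).

Definition FP (tr : seq (int * seq nat)) : R := if eok tr then eprob tr else 0.
Definition FH (tr : seq (int * seq nat)) : R :=
  if eok tr then eprob tr * (ehits tr)%:R else 0.

Lemma eok_cons it s : eok (it :: s) = if s is [::] then retb it else abdb it && eok s.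
Proof. by case: s. Qed.

Lemma eprob_cons it s : eprob (it :: s) = iter_prob R b N lo G S it * eprob s.
Proof. by rewrite /exec_prob big_cons. Qed.

Lemma ehits_cons it s : ehits (it :: s) = (hitn it + ehits s)%N.
Proof. by []. Qed.

Lemma ret_abd it : retb it -> abdb it = false.
Proof. by rewrite /retb /abdb; case: (iter_out _ _ _ _ _ _ _) => [[[]]|]. Qed.

Lemma Atot_ge0 : 0 <= Atot R N lo G S.
Proof. by apply: sumr_ge0 => i _; apply: Aof_ge0. Qed.

Lemma iprob_ge0 it : 0 <= iter_prob R b N lo G S it.
Proof.
case: it => x rs; rewrite iter_prob_E mulr_ge0 ?ww_ge0 //.
by rewrite invr_ge0 ler0z Atot_ge0.
Qed.

Lemma eprob_ge0 s : 0 <= eprob s.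
Proof.
by rewrite /exec_prob; apply: prodr_ge0 => it _; apply: iprob_ge0.
Qed.

Lemma FP_ge0 s : 0 <= FP s.
Proof. by rewrite /FP; case: ifP => // _; apply: eprob_ge0. Qed.

Lemma FH_ge0 s : 0 <= FH s.
Proof. by rewrite /FH; case: ifP => // _; apply: mulr_ge0 => //; apply: eprob_ge0. Qed.

Lemma intr_m1 (z : int) : (z - 1)%:~R = z%:~R - 1 :> R.
Proof. by rewrite intrD. Qed.

Lemma P_bound (A0 : 0 < Atot R N lo G S) L (T : seq (seq (int * seq nat))) :
  uniq T -> all (fun u => size u <= L)%N T -> \sum_(u <- T) FP u <= 1.
Proof.
elim: L T => [|L IH] T uT hT.
  rewrite big_seq big1 // => u uin; move/allP: hT => /(_ u uin).
  by case: u {uin}.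
rewrite (gen_partition ohead).
set cc := fun x : option (int * seq nat) => if x is Some it then Fi 1 1 0 it else 0.
apply: (le_trans (y := \sum_(x <- undup (map ohead T)) cc x)).
  apply: ler_sum => -[it|] _; last first.
    by rewrite big1 // => -[|y u].
  rewrite tails_sum /cc.
  have uT' := tails_uniq it uT.
  have hT' : all (fun u => size u <= L)%N (tails T it).
    apply/allP => s /tails_mem /(allP hT) /=; done.
  case hr: (retb it).
    apply: le_trans (gen_single (F := fun s => FP (it :: s)) (a := [::]) uT' (FP_ge0 _) _) _.
      move=> [|y s] // _; rewrite /FP eok_cons.
      by rewrite ret_abd.
    rewrite /FP eok_cons hr /Fi hr ret_abd // /exec_prob big_cons big_nil.
    by rewrite /= !mul1r mul0r !addr0.
  have -> : \sum_(s <- tails T it) FP (it :: s)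
      = iter_prob R b N lo G S it * (abdb it)%:R * \sum_(s <- tails T it) FP s.
    rewrite mulr_sumr; apply: eq_bigr => -[|y s] _.
      by rewrite /FP eok_cons /= hr mulr0.
    by rewrite /FP eok_cons eprob_cons; case: (abdb it); case: (eok _);
      rewrite ?mulr1 ?mulr0 ?mul0r.
  rewrite /Fi hr mul0r mulr0 !addr0 add0r mul1r.
  rewrite -[X in _ <= X]mulr1 ler_wpM2l ?IH //.
  by rewrite mulr_ge0 ?iprob_ge0.
rewrite (@sum_pmap _ _ _ cc) //.
apply: le_trans (iter_bound _ _ _ _ A0) _ => //.
- by apply: (pmap_uniq (g := Some)) => [[]|]; rewrite ?undup_uniq.
have -> : \sum_(i < N) (if (0 < SS S i)%N then (Aof R lo G S i - 1)%:~R * 1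
        + (1 * rho i 1 + 1 * (1 - rho i 1) + 0) else 0) = AR.
  rewrite /Atot; elim/big_rec2: _ => [|i y1 y2 _ ->]; first by [].
  rewrite [in RHS]intrD; congr (_ + _); case: ifP => h; last by rewrite Aof_empty.
  rewrite intr_m1; ring.
by rewrite mulVf // lt0r_neq0 // ltr0z.
Qed.
Lemma AR_sum : AR = \sum_(i < N) (if (0 < SS S i)%N then (Aof R lo G S i)%:~R else 0).
Proof.
rewrite /Atot; elim/big_rec2: _ => [|i y1 y2 _ <-]; first by [].
rewrite intrD; congr (_ + _); case: ifP => h //; by rewrite Aof_empty.
Qed.

Lemma Mof_sum : Mof R N lo G S =
  \sum_(i < N) (if (0 < SS S i)%N then (Aof R lo G S i - 1)%:~R + rho i 1 else 0).
Proof.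
rewrite /Mof; apply: eq_bigr => i _; case: ifP => h.
  by rewrite Aof_floor // /Y mul0n addr0.
by move: h; rewrite lt0n => /negbFE /eqP ->; rewrite mul0r.
Qed.

Lemma cnt_le : \sum_(i < N) (if (0 < SS S i)%N then 1 else 0) <= (N%:R : R).
Proof.
apply: (le_trans (y := \sum_(i < N) (1 : R))).
  by apply: ler_sum => i _; case: ifP.
by rewrite sumr_const card_ord.
Qed.

Lemma H_bound (A0 : 0 < Atot R N lo G S) (M0 : 0 < Mof R N lo G S) L
  (T : seq (seq (int * seq nat))) :
  uniq T -> all (fun u => size u <= L)%N T ->
  \sum_(u <- T) FH u <= N%:R / Mof R N lo G S.
Proof.
set V := N%:R / Mof R N lo G S.
have V0 : 0 <= V by rewrite divr_ge0 // ltW.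
elim: L T => [|L IH] T uT hT.
  rewrite big_seq big1 // => u uin; move/allP: hT => /(_ u uin).
  by case: u {uin}.
rewrite (gen_partition ohead).
set cc := fun x : option (int * seq nat) => if x is Some it then Fi 0 V 1 it else 0.
apply: (le_trans (y := \sum_(x <- undup (map ohead T)) cc x)).
  apply: ler_sum => -[it|] _; last first.
    by rewrite big1 // => -[|y u].
  rewrite tails_sum /cc.
  have uT' := tails_uniq it uT.
  have hT' : all (fun u => size u <= L)%N (tails T it).
    apply/allP => s /tails_mem /(allP hT) /=; done.
  case hr: (retb it).
    apply: le_trans (gen_single (F := fun s => FH (it :: s)) (a := [::]) uT' (FH_ge0 _) _) _.
      move=> [|y s] // _; rewrite /FH eok_cons.
      by rewrite ret_abd.
    rewrite /FH eok_cons hr /Fi hr ret_abd // /exec_prob big_cons big_nil.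
    rewrite ehits_cons /= addn0 /=.
    by rewrite mulr1 mul0r mulr0 !add0r mul1r.
  have -> : \sum_(s <- tails T it) FH (it :: s)
      = iter_prob R b N lo G S it * (abdb it)%:R *
        ((hitn it)%:R * \sum_(s <- tails T it) FP s + \sum_(s <- tails T it) FH s).
    rewrite mulr_sumr -big_split /= mulr_sumr; apply: eq_bigr => -[|y s] _.
      by rewrite /FH /FP eok_cons /= hr mulr0 addr0 mulr0.
    rewrite /FH /FP eok_cons eprob_cons ehits_cons natrD.
    by case: (abdb it); case: (eok _); rewrite /=; ring.
  rewrite /Fi hr /= mul0r add0r mul1r.
  have q0 := iprob_ge0 it.
  rewrite -mulrA; apply: ler_wpM2l => //; case: (abdb it); last by rewrite /= mul0r mulr0 add0r ler0n.
  rewrite mul1r mulr1 addrC lerD ?IH //.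
  by rewrite -[X in _ <= X]mulr1 ler_wpM2l // (P_bound A0 (L := L)) //.
rewrite (@sum_pmap _ _ _ cc) //.
apply: le_trans (iter_bound _ _ _ _ A0) _ => //.
- by apply: (pmap_uniq (g := Some)) => [[]|]; rewrite ?undup_uniq.
have AR0 : 0 < AR by rewrite ltr0z.
rewrite ler_pdivrMl // mulrC.
have -> : \sum_(i < N) (if (0 < SS S i)%N then (Aof R lo G S i - 1)%:~R * 0
        + (0 * rho i 1 + V * (1 - rho i 1) + 1) else 0)
   = V * AR - V * Mof R N lo G S + \sum_(i < N) (if (0 < SS S i)%N then 1 else 0).
  rewrite AR_sum Mof_sum !mulr_sumr -sumrB -big_split /=; apply: eq_bigr => i _.
  case: ifP => h; last by rewrite !mulr0 subrr addr0.
  rewrite intr_m1; ring.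
have -> : V * Mof R N lo G S = N%:R by rewrite /V divfK // lt0r_neq0.
by rewrite -addrA gerDl addrC subr_le0 cnt_le.
Qed.

End Samp.

Theorem mainTheorem4 (R : realType) (b N : nat) (lo G : int) (S : nat -> seq nat) :
  (2 <= b)%N ->
  (forall i, (i < N)%N -> forall s, s \in S i -> (2 ^ b.-1 <= s < 2 ^ b)%N) ->
  (\sum_(i < N) size (S i) < 2 ^ b)%N ->
  (1 <= \sum_(i < N) size (S i))%N ->
  (@expected_boundary_hits R b N lo G S <= ((N%:R : R) / @Mof R N lo G S)%:E)%E.
Proof.
move=> hb hS hsz hne.
have b0 : (0 < b)%N by apply: leq_trans hb.
have [i hi] : exists i : 'I_N, (0 < size (S i))%N.
  case: (pickP (fun i : 'I_N => 0 < size (S i))%N) => [i hi|h]; first by exists i.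
  exfalso; move: hne; rewrite big1 // => j _.
  by move: (h j) => /= /negbT; rewrite lt0n negbK => /eqP.
have hSS : (0 < SS S i)%N.
  move: (hS i (ltn_ord i)) hi; rewrite /SS.
  case: (S i) => [|s l] //= h _.
  have := h s (mem_head _ _) => /andP[h1 _].
  by rewrite addn_gt0 (leq_trans _ h1) // expn_gt0.
have A0 : 0 < Atot R N lo G S.
  rewrite /Atot (bigD1 i) //=.
  apply: (lt_le_trans (y := Aof R lo G S i)); first exact: (lt_le_trans ltr01 (Aof_ge1 _ _ _ hSS)).
  rewrite lerDl; apply: sumr_ge0 => j _; exact: Aof_ge0.
have M0 : 0 < Mof R N lo G S.
  rewrite /Mof (bigD1 i) //=.
  apply: (lt_le_trans (y := (SS S i)%:R * (2:R) ^ (lo + (i : nat)%:Z + G))).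
    by rewrite mulr_gt0 ?ltr0n // exprz_gt0.
  rewrite lerDl; apply: sumr_ge0 => j _.
  by rewrite mulr_ge0 // exprz_ge0.
rewrite /expected_boundary_hits /esum; apply: ge_ereal_sup => _ [X [fX sX] <-].
rewrite fsbig_finite //= sumEFin lee_fin.
have us : uniq (fset_set X) by apply: fset_uniq.
rewrite (@eq_big_seq _ _ _ _ _ _ (FH R b N lo G S)); last first.
  move=> u; rewrite in_fset_set // => hu; have hok := sX u (set_mem hu).
  by rewrite /FH (_ : exec_ok R b N lo G S u = true).
apply: (H_bound b0 A0 M0 (L := \max_(u <- fset_set X) size u)) => //.
by apply/allP => u us'; apply: leq_bigmax_seq.
Qed.
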